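(* Let $(A,\mu,\alpha,\beta)$ be a BiHom-associative algebra (with $\mu(a\otimes b)=a\cdot b$) and let $r=\sum_i x_i\otimes y_i\in A\otimes A$ be such that $(\alpha\otimes\alpha)(r)=r=(\beta\otimes\beta)(r)$ and $a\bullet A(r)=A(r)\bullet a$ for all $a\in A$. Define $\Delta_r:A\to A\otimes A$ by $\Delta_r(a)=\sum_i\alpha(x_i)\otimes y_i\cdot a-\sum_i a\cdot x_i\otimes\beta(y_i)$. Then $(A,\mu,\Delta_r,\alpha,\beta,\psi=\beta,\omega=\alpha)$ is an infinitesimal BiHom-bialgebra.
   Context: Work over a field. A BiHom-associative algebra is a 4-tuple $(A,\mu,\alpha,\beta)$ with $\alpha,\beta$ commuting linear maps, multiplicative for $\mu$, and $\alpha(x)\cdot(y\cdot z)=(x\cdot y)\cdot\beta(z)$. Actions of $A$ on $A\otimes A\otimes A$: $a\bullet(x\otimes y\otimes z)=\alpha(a)\cdot x\otimes\beta(y)\otimes\beta(z)$ and $(x\otimes y\otimes z)\bullet a=\alpha(x)\otimes\alpha(y)\otimes z\cdot\beta(a)$. With $r=\sum_i x_i\otimes y_i$: $r_{12}r_{23}=\sum_{i,j}\alpha(x_i)\otimes y_i\cdot x_j\otimes\beta(y_j)$, $r_{13}r_{12}=\sum_{i,j}x_i\cdot x_j\otimes\beta(y_j)\otimes\beta(y_i)$, $r_{23}r_{13}=\sum_{i,j}\alpha(x_i)\otimes\alpha(x_j)\otimes y_j\cdot y_i$, $A(r)=r_{13}r_{12}-r_{12}r_{23}+r_{23}r_{13}$.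 A BiHom-coassociative coalgebra is $(C,\Delta,\psi,\omega)$ with $\psi\omega=\omega\psi$, $(\psi\otimes\psi)\Delta=\Delta\psi$, $(\omega\otimes\omega)\Delta=\Delta\omega$ and $(\Delta\otimes\psi)\Delta=(\omega\otimes\Delta)\Delta$. An infinitesimal BiHom-bialgebra is a 7-tuple $(A,\mu,\Delta,\alpha,\beta,\psi,\omega)$ such that $(A,\mu,\alpha,\beta)$ is BiHom-associative, $(A,\Delta,\psi,\omega)$ is BiHom-coassociative, and for all $a,b$ (with $\Delta(a)=a_1\otimes a_2$): $\Delta(a\cdot b)=\omega(a)\cdot b_1\otimes\beta(b_2)+\alpha(a_1)\otimes a_2\cdot\psi(b)$; $\alpha\psi=\psi\alpha$, $\alpha\omega=\omega\alpha$, $\beta\psi=\psi\beta$, $\beta\omega=\omega\beta$; $(\alpha\otimes\alpha)\Delta=\Delta\alpha$, $(\beta\otimes\beta)\Delta=\Delta\beta$; $\psi,\omega$ multiplicative for $\mu$. *)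

(* Defs.v *)
From HB Require Import structures.
From mathcomp Require Import all_boot all_order all_algebra.
Set Implicit Arguments. Unset Strict Implicit. Unset Printing Implicit Defensive.
Import GRing.Theory.
Local Open Scope ring_scope.

(* Tensors in A (x) A and A (x) A (x) A over a field K are represented by
   finite lists of elementary tensors (sum of x_i (x) y_i).  Equality of
   tensors is the equality in the genuine tensor product: over a field,
   elementary products of linear functionals separate the points of
   A (x) A (resp. A (x) A (x) A), so two formal sums denote the same tensor
   iff all such pairings agree. *)

Section Tensors.
Variables (K : fieldType) (A : lmodType K).

Definition tensor2 := seq (A * A).
Definition tensor3 := seq (A * A * A).

Definition pair2 (f g : {scalar A}) (t : tensor2) : K :=
  \sum_(p <- t) f p.1 * g p.2.
Definition pair3 (f g h : {scalar A}) (t : tensor3) : K :=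
  \sum_(p <- t) f p.1.1 * g p.1.2 * h p.2.

Definition teq2 (s t : tensor2) : Prop :=
  forall f g : {scalar A}, pair2 f g s = pair2 f g t.
Definition teq3 (s t : tensor3) : Prop :=
  forall f g h : {scalar A}, pair3 f g h s = pair3 f g h t.

Definition tscale2 (k : K) (t : tensor2) : tensor2 :=
  [seq (k *: p.1, p.2) | p <- t].
Definition tscale3 (k : K) (t : tensor3) : tensor3 :=
  [seq (k *: p.1.1, p.1.2, p.2) | p <- t].

Definition tmap2 (f g : A -> A) (t : tensor2) : tensor2 :=
  [seq (f p.1, g p.2) | p <- t].

Definition DeltaL (D : A -> tensor2) (psi : A -> A) (t : tensor2) : tensor3 :=
  flatten [seq [seq (q.1, q.2, psi p.2) | q <- D p.1] | p <- t].
Definition DeltaR (omega : A -> A) (D : A -> tensor2) (t : tensor2) : tensor3 :=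
  flatten [seq [seq (omega p.1, q.1, q.2) | q <- D p.2] | p <- t].

Record BiHomAssociative (mul : A -> A -> A) (alpha beta : A -> A) : Prop := {
  bha_mull : forall b, linear (fun a => mul a b);
  bha_mulr : forall a, linear (mul a);
  bha_alpha_lin : linear alpha;
  bha_beta_lin : linear beta;
  bha_comm : forall x, alpha (beta x) = beta (alpha x);
  bha_alpha_mul : forall x y, alpha (mul x y) = mul (alpha x) (alpha y);
  bha_beta_mul : forall x y, beta (mul x y) = mul (beta x) (beta y);
  bha_assoc : forall x y z, mul (alpha x) (mul y z) = mul (mul x y) (beta z)
}.

Record BiHomCoassociative (Delta : A -> tensor2) (psi omega : A -> A) : Prop := {
  bhc_Delta_lin : forall (k : K) a b,
      teq2 (Delta (k *: a + b)) (tscale2 k (Delta a) ++ Delta b);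
  bhc_psi_lin : linear psi;
  bhc_omega_lin : linear omega;
  bhc_comm : forall x, psi (omega x) = omega (psi x);
  bhc_psi : forall x, teq2 (tmap2 psi psi (Delta x)) (Delta (psi x));
  bhc_omega : forall x, teq2 (tmap2 omega omega (Delta x)) (Delta (omega x));
  bhc_coassoc : forall x,
      teq3 (DeltaL Delta psi (Delta x)) (DeltaR omega Delta (Delta x))
}.

Record InfBiHomBialgebra (mul : A -> A -> A) (Delta : A -> tensor2)
    (alpha beta psi omega : A -> A) : Prop := {
  ib_alg : BiHomAssociative mul alpha beta;
  ib_coalg : BiHomCoassociative Delta psi omega;
  ib_compat : forall a b,
      teq2 (Delta (mul a b))
        ([seq (mul (omega a) q.1, beta q.2) | q <- Delta b]
         ++ [seq (alpha q.1, mul q.2 (psi b)) | q <- Delta a]);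
  ib_alpha_psi : forall x, alpha (psi x) = psi (alpha x);
  ib_alpha_omega : forall x, alpha (omega x) = omega (alpha x);
  ib_beta_psi : forall x, beta (psi x) = psi (beta x);
  ib_beta_omega : forall x, beta (omega x) = omega (beta x);
  ib_alpha_Delta : forall x, teq2 (tmap2 alpha alpha (Delta x)) (Delta (alpha x));
  ib_beta_Delta : forall x, teq2 (tmap2 beta beta (Delta x)) (Delta (beta x));
  ib_psi_mul : forall x y, psi (mul x y) = mul (psi x) (psi y);
  ib_omega_mul : forall x y, omega (mul x y) = mul (omega x) (omega y)
}.

Section Rmatrix.
Variables (mul : A -> A -> A) (alpha beta : A -> A) (r : tensor2).

Definition r12r23 : tensor3 :=
  [seq (alpha p.1, mul p.2 q.1, beta q.2) | p <- r, q <- r].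
Definition r13r12 : tensor3 :=
  [seq (mul p.1 q.1, beta q.2, beta p.2) | p <- r, q <- r].
Definition r23r13 : tensor3 :=
  [seq (alpha p.1, alpha q.1, mul q.2 p.2) | p <- r, q <- r].

Definition Ar : tensor3 := r13r12 ++ tscale3 (-1) r12r23 ++ r23r13.

Definition lact (a : A) (t : tensor3) : tensor3 :=
  [seq (mul (alpha a) p.1.1, beta p.1.2, beta p.2) | p <- t].
Definition ract (t : tensor3) (a : A) : tensor3 :=
  [seq (alpha p.1.1, alpha p.1.2, mul p.2 (beta a)) | p <- t].

Definition Delta_r (a : A) : tensor2 :=
  [seq (alpha p.1, mul p.2 a) | p <- r] ++ tscale2 (-1) [seq (mul a p.1, beta p.2) | p <- r].

End Rmatrix.
End Tensors.

(* Main.v *)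
From HB Require Import structures.
Require Import Defs.
From mathcomp Require Import all_boot all_order all_algebra.
From mathcomp Require Import ring.
Set Implicit Arguments. Unset Strict Implicit. Unset Printing Implicit Defensive.
Import GRing.Theory.
Local Open Scope ring_scope.

Section Gen.
Variables (K : fieldType) (A : lmodType K).

Definition mkS (h : A -> K) (hl : linear_for *%R h) : {scalar A} :=
  HB.pack h (GRing.isLinear.Build _ _ _ _ h hl).

Lemma mkS_comp (f : {scalar A}) (u : A -> A) : linear u ->
  linear_for *%R (fun x => f (u x)).
Proof. by move=> hu k x y; rewrite /= hu linearP. Qed.

Lemma lin0 (F : A -> A) : linear F -> F 0 = 0.
Proof.
move=> hF; have h := hF 1 0 0; rewrite !scale1r addr0 in h.
by apply: (addrI (F 0)); rewrite -h addr0.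
Qed.

Lemma linZ (F : A -> A) : linear F -> forall k x, F (k *: x) = k *: F x.
Proof. by move=> hF k x; have := hF k x 0; rewrite !addr0 lin0 // addr0. Qed.

Lemma linD (F : A -> A) : linear F -> forall x y, F (x + y) = F x + F y.
Proof. by move=> hF x y; have := hF 1 x y; rewrite !scale1r. Qed.

Lemma linN1 (F : A -> A) : linear F -> forall x, F ((-1) *: x) = (-1) *: F x.
Proof. by move=> hF x; rewrite linZ. Qed.

Lemma lin_id : linear (fun x : A => x). Proof. by []. Qed.
End Gen.

Section Main.
Variables (K : fieldType) (A : lmodType K) (mul : A -> A -> A) (alpha beta : A -> A)
  (r : tensor2 A).
Hypothesis HA : BiHomAssociative mul alpha beta.
Hypothesis Ha : teq2 (tmap2 alpha alpha r) r.
Hypothesis Hb : teq2 (tmap2 beta beta r) r.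

Lemma alP k x y : alpha (k *: x + y) = k *: alpha x + alpha y.
Proof. exact: (bha_alpha_lin HA). Qed.
Lemma beP k x y : beta (k *: x + y) = k *: beta x + beta y.
Proof. exact: (bha_beta_lin HA). Qed.
Lemma mlP c k x y : mul (k *: x + y) c = k *: mul x c + mul y c.
Proof. exact: (bha_mull HA c). Qed.
Lemma mrP c k x y : mul c (k *: x + y) = k *: mul c x + mul c y.
Proof. exact: (bha_mulr HA c). Qed.

Ltac lin_tac := let k := fresh in let x := fresh in let y := fresh in
  move=> k x y /=; rewrite ?(alP, beP, mlP, mrP) //.

Lemma lin_al : linear alpha. Proof. exact: (bha_alpha_lin HA). Qed.
Lemma lin_be : linear beta. Proof. exact: (bha_beta_lin HA). Qed.
Lemma lin_mr c : linear (mul c). Proof. exact: (bha_mulr HA c). Qed.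
Lemma lin_ml c : linear (fun y => mul y c). Proof. exact: (bha_mull HA c). Qed.

Lemma alN x : alpha ((-1) *: x) = (-1) *: alpha x.
Proof. by apply: linN1; lin_tac. Qed.
Lemma beN x : beta ((-1) *: x) = (-1) *: beta x.
Proof. by apply: linN1; lin_tac. Qed.
Lemma mlN c x : mul ((-1) *: x) c = (-1) *: mul x c.
Proof. by apply: (linN1 (F := fun x => mul x c)); lin_tac. Qed.
Lemma mrN c x : mul c ((-1) *: x) = (-1) *: mul c x.
Proof. by apply: linN1; lin_tac. Qed.

Lemma invS s (Hs : teq2 (tmap2 s s r) r) (u v : A -> A) (f g : {scalar A}) :
  linear u -> linear v ->
  \sum_(p <- r) f (u (s p.1)) * g (v (s p.2)) = \sum_(p <- r) f (u p.1) * g (v p.2).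
Proof.
move=> hu hv; have := Hs (mkS (mkS_comp f hu)) (mkS (mkS_comp g hv)).
by rewrite /pair2 /tmap2 big_map.
Qed.

Lemma sumDelta (F : A -> A -> K) x :
  (forall u v, F ((-1) *: u) v = - F u v) ->
  \sum_(q <- Delta_r mul alpha beta r x) F q.1 q.2 =
  \sum_(p <- r) F (alpha p.1) (mul p.2 x) - \sum_(p <- r) F (mul x p.1) (beta p.2).
Proof.
move=> hF; rewrite /Delta_r /tscale2 big_cat !big_map /= -sumrN.
by congr (_ + _); apply: eq_bigr => p _; rewrite hF.
Qed.


Notation D := (Delta_r mul alpha beta r).

Lemma fN1 (f : {scalar A}) u : f ((-1) *: u) = - f u.
Proof. by rewrite linearZ /= mulN1r. Qed.

Lemma sumD2 (f g : {scalar A}) x :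
  \sum_(q <- D x) f q.1 * g q.2 =
  \sum_(p <- r) f (alpha p.1) * g (mul p.2 x) - \sum_(p <- r) f (mul x p.1) * g (beta p.2).
Proof. by rewrite (sumDelta (F := fun a b => f a * g b)) // => u v; rewrite fN1 mulNr. Qed.

Lemma Dlin k a b : teq2 (D (k *: a + b)) (tscale2 k (D a) ++ D b).
Proof.
move=> f g; rewrite /pair2 sumD2 big_cat /tscale2 big_map /=.
under [X in _ = X + _]eq_bigr => q _ do rewrite linearZ /= -mulrA.
rewrite -big_distrr /= !sumD2.
under eq_bigr => p _ do rewrite mrP linearP /= mulrDr.
under [X in _ - X]eq_bigr => p _ do rewrite mlP linearP /= mulrDl.
rewrite !big_split /=.
under [X in X + _ - _]eq_bigr => p _ do rewrite mulrCA.
under [X in _ - (X + _)]eq_bigr => p _ do rewrite -mulrA.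
rewrite -!big_distrr /=.
ring.
Qed.


Lemma Dmap s : teq2 (tmap2 s s r) r -> linear s ->
  (forall x, s (alpha x) = alpha (s x)) -> (forall x, s (beta x) = beta (s x)) ->
  (forall x y, s (mul x y) = mul (s x) (s y)) ->
  forall x, teq2 (tmap2 s s (D x)) (D (s x)).
Proof.
move=> Hs ls sa sb sm x f g; rewrite /pair2 /tmap2 big_map /=.
rewrite (sumDelta (F := fun a b => f (s a) * g (s b))); last first.
  by move=> u v; rewrite linN1 // fN1 mulNr.
rewrite sumD2.
under eq_bigr => p _ do rewrite sa sm.
under [X in _ - X]eq_bigr => p _ do rewrite sb sm.
rewrite (invS Hs (u := alpha) (v := fun y => mul y (s x))); try lin_tac.
by rewrite (invS Hs (u := mul (s x)) (v := beta)); try lin_tac.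
Qed.


Lemma Dcompat a b : teq2 (D (mul a b))
  ([seq (mul (alpha a) q.1, beta q.2) | q <- D b]
   ++ [seq (alpha q.1, mul q.2 (beta b)) | q <- D a]).
Proof.
move=> f g; rewrite /pair2 sumD2 big_cat !big_map /=.
rewrite (sumD2 (mkS (mkS_comp f (lin_mr (alpha a)))) (mkS (mkS_comp g lin_be))).
rewrite (sumD2 (mkS (mkS_comp f lin_al)) (mkS (mkS_comp g (lin_ml (beta b))))).
rewrite /=.
have E1 : \sum_(p <- r) f (mul (alpha a) (alpha p.1)) * g (beta (mul p.2 b)) =
          \sum_(p <- r) f (alpha (mul a p.1)) * g (mul (beta p.2) (beta b)).
  by apply: eq_bigr => p _; rewrite (bha_alpha_mul HA) (bha_beta_mul HA).
have E2 : \sum_(p <- r) f (mul (alpha a) (mul b p.1)) * g (beta (beta p.2)) =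
          \sum_(p <- r) f (mul (mul a b) p.1) * g (beta p.2).
  under eq_bigr => p _ do rewrite (bha_assoc HA).
  by rewrite (invS Hb (u := mul (mul a b)) (v := beta)); try lin_tac.
have E3 : \sum_(p <- r) f (alpha (alpha p.1)) * g (mul (mul p.2 a) (beta b)) =
          \sum_(p <- r) f (alpha p.1) * g (mul p.2 (mul a b)).
  under eq_bigr => p _ do rewrite -(bha_assoc HA).
  by rewrite (invS Ha (u := alpha) (v := fun y => mul y (mul a b))); try lin_tac.
rewrite E1 E2 E3; ring.
Qed.


Lemma D2N (f g : {scalar A}) u :
  \sum_(q <- D ((-1) *: u)) f q.1 * g q.2 = - \sum_(q <- D u) f q.1 * g q.2.
Proof.
rewrite !sumD2 opprB.
under eq_bigr => p _ do rewrite mrN fN1 mulrN.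
under [X in _ - X]eq_bigr => p _ do rewrite mlN fN1 mulNr.
by rewrite !sumrN opprK addrC.
Qed.

Lemma sum3 (f g : {scalar A}) (c : K) u :
  \sum_(q <- D u) f q.1 * g q.2 * c =
  \sum_(p <- r) f (alpha p.1) * g (mul p.2 u) * c - \sum_(p <- r) f (mul u p.1) * g (beta p.2) * c.
Proof. by rewrite -big_distrl /= sumD2 mulrBl !big_distrl. Qed.

Lemma pair3_flat (f g h : {scalar A}) (T : Type) (G : T -> tensor3 A) t :
  pair3 f g h (flatten (map G t)) = \sum_(p <- t) pair3 f g h (G p).
Proof.
elim: t => [|p t IH]; first by rewrite /pair3 !big_nil.
by rewrite /= big_cons -IH /pair3 big_cat.
Qed.

Lemma LHSexp (f g h : {scalar A}) a :
  pair3 f g h (DeltaL D beta (D a)) =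
   \sum_(p <- r) \sum_(q <- r) f (alpha q.1) * g (mul q.2 (alpha p.1)) * h (beta (mul p.2 a))
 - \sum_(p <- r) \sum_(q <- r) f (mul (alpha p.1) q.1) * g (beta q.2) * h (beta (mul p.2 a))
 - (\sum_(p <- r) \sum_(q <- r) f (alpha q.1) * g (mul q.2 (mul a p.1)) * h (beta (beta p.2))
 - \sum_(p <- r) \sum_(q <- r) f (mul (mul a p.1) q.1) * g (beta q.2) * h (beta (beta p.2))).
Proof.
rewrite /DeltaL pair3_flat /pair3.
under eq_bigr => i _ do rewrite big_map /=.
rewrite (sumDelta (F := fun u v => \sum_(q <- D u) f q.1 * g q.2 * h (beta v))); last first.
  by move=> u v; rewrite -!big_distrl /= D2N mulNr.
under eq_bigr => p _ do rewrite (sum3 f g).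
under [X in _ - X]eq_bigr => p _ do rewrite (sum3 f g).
by rewrite !sumrB.
Qed.


Lemma sum3' (g h : {scalar A}) (c : K) u :
  \sum_(q <- D u) c * g q.1 * h q.2 =
  \sum_(p <- r) c * g (alpha p.1) * h (mul p.2 u) - \sum_(p <- r) c * g (mul u p.1) * h (beta p.2).
Proof.
under eq_bigr => q _ do rewrite -mulrA.
rewrite -big_distrr /= sumD2 mulrBr !big_distrr /=.
by congr (_ - _); apply: eq_bigr => p _; rewrite mulrA.
Qed.

Lemma RHSexp (f g h : {scalar A}) a :
  pair3 f g h (DeltaR alpha D (D a)) =
   \sum_(p <- r) \sum_(q <- r) f (alpha (alpha p.1)) * g (alpha q.1) * h (mul q.2 (mul p.2 a))
 - \sum_(p <- r) \sum_(q <- r) f (alpha (alpha p.1)) * g (mul (mul p.2 a) q.1) * h (beta q.2)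
 - (\sum_(p <- r) \sum_(q <- r) f (alpha (mul a p.1)) * g (alpha q.1) * h (mul q.2 (beta p.2))
 - \sum_(p <- r) \sum_(q <- r) f (alpha (mul a p.1)) * g (mul (beta p.2) q.1) * h (beta q.2)).
Proof.
rewrite /DeltaR pair3_flat /pair3.
under eq_bigr => i _ do rewrite big_map /=.
rewrite (sumDelta (F := fun u v => \sum_(q <- D v) f (alpha u) * g q.1 * h q.2)); last first.
  move=> u v; rewrite -sumrN; apply: eq_bigr => q _.
  by rewrite alN fN1 !mulNr.
under eq_bigr => p _ do rewrite (sum3' g h).
under [X in _ - X]eq_bigr => p _ do rewrite (sum3' g h).
by rewrite !sumrB.
Qed.


Lemma pair3_cat (f g h : {scalar A}) s t : pair3 f g h (s ++ t) = pair3 f g h s + pair3 f g h t.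
Proof. by rewrite /pair3 big_cat. Qed.

Lemma pair3_ap (f g h : {scalar A}) (F : A * A * A -> A * A * A) (E : A * A -> A * A -> A * A * A) :
  pair3 f g h (map F (flatten [seq [seq E p q | q <- r] | p <- r])) =
  \sum_(p <- r) \sum_(q <- r) f (F (E p q)).1.1 * g (F (E p q)).1.2 * h (F (E p q)).2.
Proof.
rewrite map_flatten -map_comp pair3_flat; apply: eq_bigr => p _.
by rewrite /pair3 /= -map_comp big_map.
Qed.

Notation Arr := (Ar mul alpha beta r).

Lemma lactExp (f g h : {scalar A}) a :
  pair3 f g h (lact mul alpha beta a Arr) =
   \sum_(p <- r) \sum_(q <- r) f (mul (alpha a) (mul p.1 q.1)) * g (beta (beta q.2)) * h (beta (beta p.2))
 - \sum_(p <- r) \sum_(q <- r) f (mul (alpha a) (alpha p.1)) * g (beta (mul p.2 q.1)) * h (beta (beta q.2))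
 + \sum_(p <- r) \sum_(q <- r) f (mul (alpha a) (alpha p.1)) * g (beta (alpha q.1)) * h (beta (mul q.2 p.2)).
Proof.
rewrite /lact /Ar /tscale3 !map_cat !pair3_cat.
rewrite /r13r12 /r23r13 !pair3_ap /r12r23 -map_comp pair3_ap /= addrA.
congr (_ + _ + _); rewrite -sumrN; apply: eq_bigr => p _; rewrite -sumrN; apply: eq_bigr => q _.
by rewrite mrN fN1 !mulNr.
Qed.

Lemma ractExp (f g h : {scalar A}) a :
  pair3 f g h (ract mul alpha beta Arr a) =
   \sum_(p <- r) \sum_(q <- r) f (alpha (mul p.1 q.1)) * g (alpha (beta q.2)) * h (mul (beta p.2) (beta a))
 - \sum_(p <- r) \sum_(q <- r) f (alpha (alpha p.1)) * g (alpha (mul p.2 q.1)) * h (mul (beta q.2) (beta a))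
 + \sum_(p <- r) \sum_(q <- r) f (alpha (alpha p.1)) * g (alpha (alpha q.1)) * h (mul (mul q.2 p.2) (beta a)).
Proof.
rewrite /ract /Ar /tscale3 !map_cat !pair3_cat.
rewrite /r13r12 /r23r13 !pair3_ap /r12r23 -map_comp pair3_ap /= addrA.
congr (_ + _ + _); rewrite -sumrN; apply: eq_bigr => p _; rewrite -sumrN; apply: eq_bigr => q _.
by rewrite alN fN1 !mulNr.
Qed.


Lemma invS3 s (Hs : teq2 (tmap2 s s r) r) (u v : A -> A) (f g : {scalar A}) (c : K) :
  linear u -> linear v ->
  \sum_(q <- r) f (u (s q.1)) * g (v (s q.2)) * c = \sum_(q <- r) f (u q.1) * g (v q.2) * c.
Proof. by move=> hu hv; have := congr1 (fun t => t * c) (invS Hs f g hu hv); rewrite /= !big_distrl. Qed.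

Lemma invS3' s (Hs : teq2 (tmap2 s s r) r) (u v : A -> A) (f g : {scalar A}) (c : K) :
  linear u -> linear v ->
  \sum_(q <- r) c * f (u (s q.1)) * g (v (s q.2)) = \sum_(q <- r) c * f (u q.1) * g (v q.2).
Proof.
move=> hu hv; have := congr1 (fun t => c * t) (invS Hs f g hu hv).
by rewrite /= !big_distrr /=; under eq_bigr => q _ do rewrite mulrA; under [in RHS]eq_bigr => q _ do rewrite mulrA.
Qed.

Section Ids.
Variables (f g h : {scalar A}) (a : A).
Let al_mul := bha_alpha_mul HA.
Let be_mul := bha_beta_mul HA.
Let assoc := bha_assoc HA.
Let comm := bha_comm HA.

Lemma E1 :
  \sum_(p <- r) \sum_(q <- r) f (mul (alpha a) (mul p.1 q.1)) * g (beta (beta q.2)) * h (beta (beta p.2))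
 = \sum_(p <- r) \sum_(q <- r) f (mul (mul a p.1) q.1) * g (beta q.2) * h (beta (beta p.2)).
Proof.
apply: eq_bigr => p _.
under eq_bigr => q _ do rewrite assoc.
exact: (invS3 Hb (u := mul (mul a p.1)) (v := beta) _ _ _ (lin_mr _) lin_be).
Qed.

Lemma E2 :
  \sum_(p <- r) \sum_(q <- r) f (mul (alpha a) (alpha p.1)) * g (beta (mul p.2 q.1)) * h (beta (beta q.2))
 = \sum_(p <- r) \sum_(q <- r) f (alpha (mul a p.1)) * g (mul (beta p.2) q.1) * h (beta q.2).
Proof.
apply: eq_bigr => p _.
under eq_bigr => q _ do rewrite be_mul -al_mul.
exact: (invS3' Hb (u := mul (beta p.2)) (v := beta) _ _ _ (lin_mr _) lin_be).
Qed.

Lemma E3 :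
  \sum_(p <- r) \sum_(q <- r) f (mul (alpha a) (alpha p.1)) * g (beta (alpha q.1)) * h (beta (mul q.2 p.2))
 = \sum_(p <- r) \sum_(q <- r) f (alpha (mul a p.1)) * g (alpha q.1) * h (mul q.2 (beta p.2)).
Proof.
apply: eq_bigr => p _.
under eq_bigr => q _ do rewrite be_mul -al_mul -comm.
exact: (invS3' Hb (u := alpha) (v := fun y => mul y (beta p.2)) _ _ _ lin_al (lin_ml _)).
Qed.

Lemma E4 :
  \sum_(p <- r) \sum_(q <- r) f (alpha (mul p.1 q.1)) * g (alpha (beta q.2)) * h (mul (beta p.2) (beta a))
 = \sum_(p <- r) \sum_(q <- r) f (mul (alpha p.1) q.1) * g (beta q.2) * h (beta (mul p.2 a)).
Proof.
apply: eq_bigr => p _.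
under eq_bigr => q _ do rewrite al_mul comm -be_mul.
exact: (invS3 Ha (u := mul (alpha p.1)) (v := beta) _ _ _ (lin_mr _) lin_be).
Qed.

Lemma E5 :
  \sum_(p <- r) \sum_(q <- r) f (alpha (alpha p.1)) * g (alpha (alpha q.1)) * h (mul (mul q.2 p.2) (beta a))
 = \sum_(p <- r) \sum_(q <- r) f (alpha (alpha p.1)) * g (alpha q.1) * h (mul q.2 (mul p.2 a)).
Proof.
apply: eq_bigr => p _.
under eq_bigr => q _ do rewrite -assoc.
exact: (invS3' Ha (u := alpha) (v := fun y => mul y (mul p.2 a)) _ _ _ lin_al (lin_ml _)).
Qed.

Lemma E6 :
  \sum_(p <- r) \sum_(q <- r) f (alpha (alpha p.1)) * g (mul (mul p.2 a) q.1) * h (beta q.2)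
 = \sum_(p <- r) \sum_(q <- r) f (alpha q.1) * g (mul q.2 (mul a p.1)) * h (beta (beta p.2)).
Proof.
transitivity (\sum_(p <- r) \sum_(q <- r) f (alpha (alpha p.1)) * g (mul (alpha p.2) (mul a q.1)) * h (beta (beta q.2))).
  apply: eq_bigr => p _.
  rewrite -(invS3' Hb (u := mul (mul p.2 a)) (v := beta) _ _ _ (lin_mr _) lin_be).
  by apply: eq_bigr => q _; rewrite assoc.
rewrite exchange_big /=; apply: eq_bigr => q _.
exact: (invS3 Ha (u := alpha) (v := fun y => mul y (mul a q.1)) _ _ _ lin_al (lin_ml _)).
Qed.

Lemma E7 :
  \sum_(p <- r) \sum_(q <- r) f (alpha (alpha p.1)) * g (alpha (mul p.2 q.1)) * h (mul (beta q.2) (beta a))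
 = \sum_(p <- r) \sum_(q <- r) f (alpha q.1) * g (mul q.2 (alpha p.1)) * h (beta (mul p.2 a)).
Proof.
rewrite exchange_big /=; apply: eq_bigr => q _.
under eq_bigr => p _ do rewrite al_mul -be_mul.
exact: (invS3 Ha (u := alpha) (v := fun y => mul y (alpha q.1)) _ _ _ lin_al (lin_ml _)).
Qed.

End Ids.

Lemma lin_close (L1 L2 L3 L4 R1 R3 R4 : K) :
  L4 - R4 + R3 = L2 - L1 + R1 -> L1 - L2 - (L3 - L4) = R1 - L3 - (R3 - R4).
Proof.
move=> H; have -> : L4 = L2 - L1 + R1 + R4 - R3 by rewrite -H; ring.
ring.
Qed.

Lemma coassoc :
  (forall a : A, teq3 (lact mul alpha beta a Arr) (ract mul alpha beta Arr a)) ->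
  forall x, teq3 (DeltaL D beta (D x)) (DeltaR alpha D (D x)).
Proof.
move=> HAr x f g h; have := HAr x f g h.
rewrite LHSexp RHSexp lactExp ractExp E1 E2 E3 E4 E5 E6 E7.
exact: lin_close.
Qed.

Ltac solv := first [assumption | done].

Lemma main_thm :
  (forall a : A, teq3 (lact mul alpha beta a Arr) (ract mul alpha beta Arr a)) ->
  InfBiHomBialgebra mul D alpha beta beta alpha.
Proof.
move=> HAr.
have comm := bha_comm HA.
have be_mul := bha_beta_mul HA.
have al_mul := bha_alpha_mul HA.
have la := lin_al. have lb := lin_be.
have comm' : forall x, beta (alpha x) = alpha (beta x) by move=> x; rewrite comm.
split => //.
- split.
  + exact: Dlin.
  + exact: lin_be.
  + exact: lin_al.
  + by move=> x; rewrite comm.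
  + by apply: Dmap => //; solv.
  + by apply: Dmap => //; solv.
  + exact: coassoc.
- exact: Dcompat.
- by apply: Dmap => //; solv.
- by apply: Dmap => //; solv.
Qed.

End Main.

Theorem proposition5p5 (K : fieldType) (A : lmodType K)
    (mul : A -> A -> A) (alpha beta : A -> A) (r : tensor2 A) :
  BiHomAssociative mul alpha beta ->
  teq2 (tmap2 alpha alpha r) r ->
  teq2 (tmap2 beta beta r) r ->
  (forall a : A, teq3 (lact mul alpha beta a (Ar mul alpha beta r))
                      (ract mul alpha beta (Ar mul alpha beta r) a)) ->
  InfBiHomBialgebra mul (Delta_r mul alpha beta r) alpha beta beta alpha.
Proof. by move=> HA Ha Hb HAr; apply: main_thm. Qed.
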